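(* Let $N\ge1$, $0=\tau_0<\cdots<\tau_N=1$, $\Delta_i=\tau_{i+1}-\tau_i$, $D_2=\sum_i\Delta_i^2$, $0<\omega<1/N$ and $\mathcal W_\omega=\{w\in\mathbb R^N:w_i\ge\omega\ \forall i,\ \sum_iw_i=1\}$. Fix $\varepsilon_a>0$, nonnegative weights $K_\sigma(i,\ell)$ with $\sum_\ell K_\sigma(i,\ell)=1$, numbers $\widehat{\mathcal A}_i\ge0$ and $\mathcal A_i\ge0$. Define $\widehat b_i=\sum_\ell K_\sigma(i,\ell)\sqrt{\widehat{\mathcal A}_\ell+\varepsilon_a}$, $\widehat\phi_i=\widehat b_i^2$, $\widehat w_i=\Delta_i\widehat b_i/\sum_\ell\Delta_\ell\widehat b_\ell$, $b_i^\star=\sum_\ell K_\sigma(i,\ell)\sqrt{\mathcal A_\ell+\varepsilon_a}$, $\phi_i^\star=(b_i^\star)^2$, $\mathcal J(w)=\sum_i\mathcal A_i\Delta_i^2/w_i$, $\mathcal J_{\sigma,\varepsilon_a}(w)=\sum_i\phi_i^\star\Delta_i^2/w_i$, $\beta_{\sigma,\varepsilon_a}=\max_i|\phi_i^\star-\mathcal A_i|$, and let $w^\star\in\arg\min_{w\in\mathcal W_\omega}\mathcal J(w)$. Then for every $w\in\mathcal W_\omega$, $$|\mathcal J_{\sigma,\varepsilon_a}(w)-\mathcal J(w)|\le\frac{D_2}{\omega}\beta_{\sigma,\varepsilon_a}.$$ Consequently, if moreover $\widehat w\in\mathcal W_\omega$, $\zeta\ge0$, and $\max_i|\widehat\phi_i-\phi_i^\star|\le\zeta$,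 then $$\mathcal J(\widehat w)\le\mathcal J(w^\star)+\frac{2D_2}{\omega}\bigl(\zeta+\beta_{\sigma,\varepsilon_a}\bigr).$$ *)

(* Defs.v *)
From mathcomp Require Import all_boot all_order all_algebra.
From mathcomp Require Import reals.
Set Implicit Arguments. Unset Strict Implicit. Unset Printing Implicit Defensive.
Import Order.TTheory GRing.Theory Num.Theory.
Local Open Scope ring_scope.

Section Defs.
Variables (R : realType) (N : nat).

Definition is_mesh (tau : nat -> R) : Prop :=
  tau 0%N = 0 /\ tau N = 1 /\ (forall i : nat, (i < N)%N -> tau i < tau i.+1).

Definition Delta (tau : nat -> R) (i : 'I_N) : R := tau i.+1 - tau i.

Definition D2 (tau : nat -> R) : R := \sum_(i < N) (Delta tau i) ^+ 2.

Definition Wset (omega : R) (w : 'I_N -> R) : Prop :=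
  (forall i, omega <= w i) /\ \sum_(i < N) w i = 1.

Definition bvec (K : 'I_N -> 'I_N -> R) (eps : R) (A : 'I_N -> R) (i : 'I_N) : R :=
  \sum_(l < N) K i l * Num.sqrt (A l + eps).

Definition phivec K eps A i : R := (bvec K eps A i) ^+ 2.

Definition what (tau : nat -> R) K eps (Ahat : 'I_N -> R) (i : 'I_N) : R :=
  Delta tau i * bvec K eps Ahat i / \sum_(l < N) Delta tau l * bvec K eps Ahat l.

Definition Jfun (tau : nat -> R) (a : 'I_N -> R) (w : 'I_N -> R) : R :=
  \sum_(i < N) a i * (Delta tau i) ^+ 2 / w i.

(* max over i of nonnegative quantities (N >= 1) *)
Definition maxI (f : 'I_N -> R) : R := \big[Num.max/0]_(i < N) f i.

End Defs.

(* Main.v *)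
Require Import Defs.
From mathcomp Require Import all_boot all_order all_algebra.
From mathcomp Require Import reals.
From mathcomp Require Import ring lra.
Import Order.TTheory GRing.Theory Num.Theory.
Local Open Scope ring_scope.

Lemma maxI_ge (R : realType) (N : nat) (f : 'I_N -> R) i : f i <= maxI f.
Proof.
rewrite /maxI.
have : i \in index_enum 'I_N by exact: mem_index_enum.
elim: (index_enum 'I_N) => [//|x s IH].
rewrite inE big_cons /= le_max => /orP [/eqP -> | /IH ->]; last by rewrite orbT.
by rewrite lexx.
Qed.

Lemma Jdiff (R : realType) (N : nat) (tau : nat -> R) (omega M : R)
  (a c w : 'I_N -> R) :
  0 < omega -> Wset omega w -> (forall i, `|a i - c i| <= M) ->
  `|Jfun tau a w - Jfun tau c w| <= D2 N tau / omega * M.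
Proof.
move=> om [Hw _] HM.
have -> : D2 N tau / omega * M = \sum_(i < N) M * (Delta tau i ^+ 2 / omega).
  by rewrite -mulr_sumr -mulr_suml /D2; ring.
rewrite /Jfun -sumrB.
apply: le_trans (ler_norm_sum _ _ _) _.
apply: ler_sum => i _.
have wi : 0 < w i by apply: lt_le_trans om (Hw i).
have d0 : 0 <= Delta tau i ^+ 2 by apply: sqr_ge0.
have -> : a i * Delta tau i ^+ 2 / w i - c i * Delta tau i ^+ 2 / w i
   = (a i - c i) * (Delta tau i ^+ 2 / w i) by rewrite mulrBl !mulrA.
rewrite normrM (ger0_norm (divr_ge0 d0 (ltW wi))).
have M0 : 0 <= M by apply: le_trans (HM i).
apply: ler_pM => //; first by apply: divr_ge0 => //; apply: ltW.
apply: ler_wpM2l => //.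
by rewrite lef_pV2 // ?(Hw i) // posrE.
Qed.

Lemma cs_step (R : realType) (x w t : R) : 0 < w -> 2 * x * t - t ^+ 2 * w <= x ^+ 2 / w.
Proof.
move=> w0.
have : 0 <= (x - t * w) ^+ 2 / w by apply: divr_ge0; [apply: sqr_ge0 | apply: ltW].
have -> : (x - t * w) ^+ 2 / w = x ^+ 2 / w - (2 * x * t - t ^+ 2 * w).
  field. by rewrite gt_eqF.
by rewrite subr_ge0.
Qed.

Theorem lemma5 (R : realType) (N : nat) (tau : nat -> R) (omega eps : R)
  (K : 'I_N -> 'I_N -> R) (Ahat A : 'I_N -> R) (wstar : 'I_N -> R) :
  (1 <= N)%N ->
  is_mesh N tau ->
  0 < omega -> omega < N%:R^-1 ->
  0 < eps ->
  (forall i l, 0 <= K i l) ->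
  (forall i, \sum_(l < N) K i l = 1) ->
  (forall i, 0 <= Ahat i) ->
  (forall i, 0 <= A i) ->
  Wset omega wstar ->
  (forall w, Wset omega w -> Jfun tau A wstar <= Jfun tau A w) ->
  (forall w, Wset omega w ->
     `| Jfun tau (phivec K eps A) w - Jfun tau A w |
       <= D2 N tau / omega * maxI (fun i => `| phivec K eps A i - A i |))
  /\
  (forall zeta : R,
     Wset omega (what tau K eps Ahat) ->
     0 <= zeta ->
     maxI (fun i => `| phivec K eps Ahat i - phivec K eps A i |) <= zeta ->
     Jfun tau A (what tau K eps Ahat)
       <= Jfun tau A wstar
          + 2 * D2 N tau / omega
            * (zeta + maxI (fun i => `| phivec K eps A i - A i |))).
Proof.
move=> _ _ om _ _ _ _ _ _ Wst _.
set beta := maxI _.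
split.
  move=> w Ww; apply: Jdiff => // i; exact: (@maxI_ge _ _ (fun i => `| phivec K eps A i - A i |) i).
move=> zeta Wh z0 Hz.
set wh := what tau K eps Ahat.
have HM : forall i, `|phivec K eps Ahat i - A i| <= zeta + beta.
  move=> i.
  have e : phivec K eps Ahat i - A i
     = (phivec K eps Ahat i - phivec K eps A i) + (phivec K eps A i - A i) by ring.
  rewrite e; apply: le_trans (ler_normD _ _) _; apply: lerD.
    exact: le_trans (@maxI_ge _ _ (fun i => `| phivec K eps Ahat i - phivec K eps A i |) i) Hz.
  exact: (@maxI_ge _ _ (fun i => `| phivec K eps A i - A i |) i).
have HM' : forall i, `|A i - phivec K eps Ahat i| <= zeta + beta.
  by move=> i; rewrite distrC.
(* optimality of wh for Jhat *)
set S := \sum_(l < N) Delta tau l * bvec K eps Ahat l.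
have Jwh : Jfun tau (phivec K eps Ahat) wh = S ^+ 2.
  rewrite /Jfun expr2 mulr_suml; apply: eq_bigr => i _.
  have wi : 0 < wh i by apply: lt_le_trans om (Wh.1 i).
  move: wi; rewrite /wh /what -/S => wi.
  have S0 : S != 0 by apply/eqP => S0; move: wi; rewrite S0 invr0 mulr0 ltxx.
  have x0 : Delta tau i * bvec K eps Ahat i != 0.
    by apply/eqP => x0; move: wi; rewrite x0 mul0r ltxx.
  rewrite /phivec; field.
  by move: x0; rewrite mulf_eq0 negb_or S0 => /andP [-> ->].
have Jopt : forall w, Wset omega w -> S ^+ 2 <= Jfun tau (phivec K eps Ahat) w.
  move=> w [Hw Hs].
  have : \sum_(i < N) (2 * (Delta tau i * bvec K eps Ahat i) * S - S ^+ 2 * w i)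
          <= Jfun tau (phivec K eps Ahat) w.
    rewrite /Jfun; apply: ler_sum => i _.
    have -> : phivec K eps Ahat i * Delta tau i ^+ 2 / w i
         = (Delta tau i * bvec K eps Ahat i) ^+ 2 / w i by rewrite /phivec; ring.
    apply: cs_step; exact: lt_le_trans om (Hw i).
  rewrite sumrB -mulr_suml -mulr_sumr -mulr_sumr Hs.
  rewrite -/S.
  have -> : 2 * S * S - S ^+ 2 * 1 = S ^+ 2 by ring.
  by [].
have h1 := @Jdiff _ _ tau _ _ _ _ _ om Wh HM'.
have h2 := @Jdiff _ _ tau _ _ _ _ _ om Wst HM.
have h3 := Jopt _ Wst.
move: h1 h2; rewrite -/wh Jwh => h1 h2.
move: h1 => /ler_normlP [h1a h1b].
move: h2 => /ler_normlP [h2a h2b].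
set X := D2 N tau / omega * (zeta + beta) in h1a h1b h2a h2b.
have -> : 2 * D2 N tau / omega * (zeta + beta) = 2 * X by rewrite /X !mulrA.
lra.
Qed.
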